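(* Let $G=(V,E)$ be a control flow graph, let $p$ be a predicate node with successors $s_1,s_2$ in $G$ and with at least two successors in $A_p$. If $V_1\cap V_2\neq\emptyset$, then there are no nodes $a,b$ that are DOD on $p$.
   Context: A control flow graph (CFG) is a finite directed graph $G=(V,E)$ in which every node has at most two outgoing edges; nodes with exactly two outgoing edges are predicate nodes. A path from $n_1$ is a nonempty finite or infinite sequence of nodes with each adjacent pair an edge; it is maximal if it is infinite or its last node has no successor. $V_p$ is the set of nodes occurring on all maximal paths from $p$ in $G$. For $V'\subseteq V$, a $V'$-interval from $x$ to $y$ is a finite path $n_1\ldots n_k$ in $G$ with $k\ge 2$, $n_1=x\in V'$, $n_k=y\in V'$, and $n_i\notin V'$ for $1<i<k$. $A_p$ is the directed graph with node set $V_p$ and an edge $(x,y)$ iff there is a $V_p$-interval from $x$ to $y$ in $G$. For $i\in\{1,2\}$, $V_i$ is the set of nodes $n\in V_p$ such that there is a finite path in $G$ from $s_i$ to $n$ whose nodes other than the last one all lie outside $V_p$ (possibly $n=s_i$). For three distinct nodes $p,a,b$ with $p$ a predicate node with successors $s_1,s_2$, the nodes $a,b$ are DOD on $p$ if all maximal paths from $p$ contain both $a$ and $b$, all maximal paths from $s_1$ contain $a$ before any occurrence of $b$, and all maximal paths from $s_2$ contain $b$ before any occurrence of $a$. *)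

(* Defs.v *)
From mathcomp Require Import all_boot.
Set Implicit Arguments. Unset Strict Implicit. Unset Printing Implicit Defensive.

Section CFG.
Variables (T : finType) (E : rel T).

Definition is_cfg : Prop := forall x : T, #|[pred y | E x y]| <= 2.

Definition predicate_node (x : T) : Prop := #|[pred y | E x y]| = 2.

Definition inf_path (f : nat -> T) : Prop := forall i, E (f i) (f i.+1).

(* a maximal finite path from x: the node list x :: s, whose last node has no successor *)
Definition max_fin_path (x : T) (s : seq T) : Prop :=
  path E x s /\ forall y, ~~ E (last x s) y.

Definition on_all_max (x n : T) : Prop :=
  (forall f : nat -> T, f 0 = x -> inf_path f -> exists i, f i = n) /\
  (forall s : seq T, max_fin_path x s -> n \in x :: s).

Definition all_max_before (x a b : T) : Prop :=
  (forall f : nat -> T, f 0 = x -> inf_path f ->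
     exists i, f i = a /\ forall j, j <= i -> f j <> b) /\
  (forall s : seq T, max_fin_path x s ->
     a \in x :: s /\ index a (x :: s) < index b (x :: s)).

Definition Vp (p n : T) : Prop := on_all_max p n.

(* a V'-interval from x to y: the path x :: s ++ [y], interior nodes s outside V' *)
Definition interval (V' : T -> Prop) (x y : T) : Prop :=
  V' x /\ V' y /\
  exists s : seq T, path E x (rcons s y) /\ forall z, z \in s -> ~ V' z.

Definition Ap_edge (p x y : T) : Prop := interval (Vp p) x y.

Definition Vi (p si n : T) : Prop :=
  Vp p n /\
  exists s : seq T, path E si s /\ last si s = n /\
    forall z, z \in belast si s -> ~ Vp p z.

Definition DOD (p s1 s2 a b : T) : Prop :=
  p <> a /\ p <> b /\ a <> b /\
  on_all_max p a /\ on_all_max p b /\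
  all_max_before s1 a b /\ all_max_before s2 b a.

End CFG.

(* Main.v *)
Require Import Defs.
From mathcomp Require Import all_boot.
From Stdlib Require Import Classical.
From mathcomp Require Import zify.

Set Implicit Arguments. Unset Strict Implicit. Unset Printing Implicit Defensive.

Section Aux.
Variables (T : finType) (E : rel T).

Lemma transfer_fin x pi n r a b :
  path E x pi -> last x pi = n -> a \notin belast x pi -> b \notin belast x pi ->
  max_fin_path E n r -> all_max_before E x a b ->
  index a (n :: r) < index b (n :: r).
Proof.
move=> Hp Hl Ha Hb [Hr Hs] [_ Hfin].
have Hm : max_fin_path E x (pi ++ r).
  split; first by rewrite cat_path Hp Hl Hr.
  by rewrite last_cat Hl.
have [_ ] := Hfin _ Hm.
have -> : x :: pi ++ r = belast x pi ++ n :: r.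
  by rewrite -cat_cons lastI Hl cat_rcons.
by rewrite !index_cat (negbTE Ha) (negbTE Hb) ltn_add2l.
Qed.

Lemma transfer_inf x pi n f a b :
  path E x pi -> last x pi = n -> a \notin belast x pi ->
  f 0 = n -> inf_path E f -> all_max_before E x a b ->
  exists i, f i = a /\ forall j, j <= i -> f j <> b.
Proof.
move=> Hp Hl Ha Hf0 Hf [Hinf _].
set k := size pi.
pose h j := if j < k then nth x (x :: pi) j else f (j - k).
have Hnb : forall j, j < k -> nth x (x :: pi) j = nth x (belast x pi) j.
  move=> j Hj; rewrite lastI nth_rcons size_belast Hj //.
have H0' : h 0 = x.
  rewrite /h; case: ifP => // Hk.
  have Hpi : size pi == 0 by rewrite /k in Hk; lia.
  rewrite size_eq0 in Hpi; move/eqP: Hpi => Hpi; rewrite Hpi /= in Hl.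
  by rewrite sub0n Hf0 -Hl.
have Hh : inf_path E h.
  move=> j; rewrite /h.
  case: (ltnP j k) => Hj.
    move/pathP: Hp => /(_ x j Hj) Hpj.
    case: ifP => Hj1.
      by [].
    have -> : j.+1 - k = 0 by lia.
    rewrite Hf0 -Hl.
    have Ek : j = k.-1 by lia.
    move: Hpj; rewrite Ek nth_last //.
  have -> : j.+1 < k = false by lia.
  have -> : j.+1 - k = (j - k).+1 by lia.
  exact: Hf.
have [i [Hia Hib]] := Hinf h H0' Hh.
have Hik : k <= i.
  case: (ltnP i k) => // Hik.
  move: Hia; rewrite /h Hik Hnb // => Hn.
  by move: Ha; rewrite -Hn mem_nth // size_belast.
exists (i - k); split.
  have Eik : (i < k) = false by lia.
  by move: Hia; rewrite /h Eik.
move=> j Hj; have := Hib (j + k) ltac:(lia).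
have Ejk : (j + k < k) = false by lia.
by rewrite /h Ejk addnK.
Qed.

Lemma exists_max n :
  (exists r, max_fin_path E n r) \/ exists f, f 0 = n /\ inf_path E f.
Proof.
case: (classic (exists r, max_fin_path E n r)) => H; [by left | right].
pose g x := if [pick y | E x y] is Some y then y else x.
pose f i := iter i g n.
have Hinv : forall i, exists s, path E n s /\ last n s = f i /\ E (f i) (g (f i)).
  elim=> [|i [s [Hs [Hl He]]]].
    have Hg : E n (g n).
      rewrite /g; case: pickP => [//|Hno].
      by exfalso; apply: H; exists [::]; split => // y /=; rewrite Hno.
    by exists [::].
  have Hg : E (f i.+1) (g (f i.+1)).
    rewrite /g; case: pickP => [//|Hno].
    exfalso; apply: H; exists (rcons s (g (f i))); split.
      by rewrite rcons_path Hs Hl He.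
    by move=> y; rewrite last_rcons; have := Hno y; rewrite /= => ->.
  exists (rcons s (g (f i))); split; first by rewrite rcons_path Hs Hl He.
  by rewrite last_rcons.
exists f; split => // i; have [s [_ [_ He]]] := Hinv i; exact: He.
Qed.

End Aux.

Theorem lemma4p10 (T : finType) (E : rel T) (p s1 s2 : T) :
  is_cfg E ->
  predicate_node E p -> s1 <> s2 -> E p s1 -> E p s2 ->
  (exists y1 y2, y1 <> y2 /\ Ap_edge E p p y1 /\ Ap_edge E p p y2) ->
  (exists n, Vi E p s1 n /\ Vi E p s2 n) ->
  ~ (exists a b, DOD E p s1 s2 a b).
Proof.
move=> _ _ _ _ _ _ [n [[_ [pi1 [Hp1 [Hl1 Hn1]]]] [_ [pi2 [Hp2 [Hl2 Hn2]]]]]].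
move=> [a [b [_ [_ [_ [Ha [Hb [H1 H2]]]]]]]].
have nb : forall si pi, (forall z, z \in belast si pi -> ~ Vp E p z) ->
   a \notin belast si pi /\ b \notin belast si pi.
  by move=> si pi Hn; split; apply/negP => /Hn; apply.
have [a1 b1] := nb _ _ Hn1; have [a2 b2] := nb _ _ Hn2.
case: (exists_max E n) => [[r Hr]|[f [Hf0 Hf]]].
  have := transfer_fin Hp1 Hl1 a1 b1 Hr H1.
  have := transfer_fin Hp2 Hl2 b2 a2 Hr H2.
  lia.
have [i [Hia Hib]] := transfer_inf Hp1 Hl1 a1 Hf0 Hf H1.
have [j [Hja Hjb]] := transfer_inf Hp2 Hl2 b2 Hf0 Hf H2.
case: (leqP i j) => Hij.
  by apply: (Hjb i Hij).
by apply: (Hib j (ltnW Hij)).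
Qed.
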